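(* Let $d_d=2t_d+1$ with $t_d\ge0$, let $f:\mathbb{F}_q^k\to\mathrm{Im}(f)$ be a $d_d$-locally binary function with $|\mathrm{Im}(f)|\ge2$, and suppose there exists a perfect linear $[n,k,d_d]$ code over $\mathbb{F}_q$, i.e. $\sum_{i=0}^{t_d}\binom{n}{i}(q-1)^i=q^{n-k}$. Then $r_f(k:d_d,d_d+1)=n-k+1$.
   Context: $d(\cdot,\cdot)$ is Hamming distance. $B_f(u,\rho)=\{f(u'):d(u,u')\le\rho\}$; $f$ is $\rho$-locally binary if $|B_f(u,\rho)|\le2$ for all $u$. For integers $0\le d_d\le d_f$, an $(f\!:d_d,d_f)$-FCC with redundancy $r$ is a systematic encoding $\mathfrak{C}_f(u)=(u,p_u)\in\mathbb{F}_q^{k+r}$ with $d(\mathfrak{C}_f(u_1),\mathfrak{C}_f(u_2))\ge d_d$ whenever $u_1\ne u_2$ and $\ge d_f$ whenever $f(u_1)\ne f(u_2)$; $r_f(k:d_d,d_f)$ is the minimum such $r$. *)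

(* Defs.v *)
From HB Require Import structures.
From mathcomp Require Import all_boot all_order all_algebra.
Set Implicit Arguments. Unset Strict Implicit. Unset Printing Implicit Defensive.
Import GRing.Theory.
Local Open Scope ring_scope.

Section Defs.
Variable F : finFieldType.

Definition dH (n : nat) (u v : 'rV[F]_n) : nat := #|[pred i : 'I_n | u 0 i != v 0 i]|.

Definition Bf (Y : eqType) (k : nat) (f : 'rV[F]_k -> Y) (u : 'rV[F]_k) (rho : nat)
  : seq Y := undup [seq f u' | u' <- enum 'rV[F]_k & (dH u u' <= rho)%N].

Definition locally_binary (Y : eqType) (k : nat) (f : 'rV[F]_k -> Y) (rho : nat) : Prop :=
  forall u, (size (Bf f u rho) <= 2)%N.

(* The systematic encoding u |-> (u, p u) is an (f : dd, df)-FCC with redundancy r *)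
Definition is_FCC (Y : eqType) (k : nat) (f : 'rV[F]_k -> Y) (dd df r : nat)
  (p : 'rV[F]_k -> 'rV[F]_r) : Prop :=
  forall u1 u2 : 'rV[F]_k,
    (u1 != u2 -> (dd <= dH (row_mx u1 (p u1)) (row_mx u2 (p u2)))%N) /\
    (f u1 != f u2 -> (df <= dH (row_mx u1 (p u1)) (row_mx u2 (p u2)))%N).

Definition is_opt_redundancy (Y : eqType) (k : nat) (f : 'rV[F]_k -> Y) (dd df r : nat)
  : Prop :=
  (exists p : 'rV[F]_k -> 'rV[F]_r, is_FCC f dd df p) /\
  (forall r' (p : 'rV[F]_k -> 'rV[F]_r'), is_FCC f dd df p -> (r <= r')%N).

Definition perfect_linear_code (n k t : nat) (C : {vspace 'rV[F]_n}) : Prop :=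
  [/\ \dim C = k,
      (forall c1 c2, c1 \in C -> c2 \in C -> c1 != c2 -> (2 * t + 1 <= dH c1 c2)%N),
      (exists c1 c2, [/\ c1 \in C, c2 \in C & dH c1 c2 = 2 * t + 1]) &
      (* perfect: radius-t balls around codewords cover the space *)
      (forall v : 'rV[F]_n, exists2 c, c \in C & (dH v c <= t)%N)].
End Defs.

(* Main.v *)
Require Import Defs.
From HB Require Import structures.
From mathcomp Require Import all_boot all_order all_algebra zify.
Set Implicit Arguments. Unset Strict Implicit. Unset Printing Implicit Defensive.
Import GRing.Theory.
Local Open Scope ring_scope.

Section DH.
Variable F : finFieldType.

Lemma dH_sym n (u v : 'rV[F]_n) : dH u v = dH v u.
Proof. by apply: eq_card => i; rewrite !inE /= eq_sym. Qed.

Lemma dH_refl n (u : 'rV[F]_n) : dH u u = 0%N.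
Proof. by apply: eq_card0 => i; rewrite !inE /= eqxx. Qed.

Lemma dH_eq0 n (u v : 'rV[F]_n) : dH u v = 0%N -> u = v.
Proof.
move/card0_eq => H; apply/rowP => i; have := H i; rewrite !inE /=.
by move/negbFE/eqP.
Qed.

Lemma dH_le n (u v : 'rV[F]_n) : (dH u v <= n)%N.
Proof. by apply: leq_trans (max_card _) _; rewrite card_ord. Qed.

Lemma dH_tri n (x y z : 'rV[F]_n) : (dH x z <= dH x y + dH y z)%N.
Proof.
rewrite /dH.
have Hs : [pred i : 'I_n | x 0 i != z 0 i] \subset
  [predU [pred i : 'I_n | x 0 i != y 0 i] & [pred i : 'I_n | y 0 i != z 0 i]].
  apply/subsetP => i; rewrite !inE /=; apply: contraLR.
  by rewrite negb_or !negbK => /andP[/eqP-> /eqP->].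
apply: (leq_trans (subset_leq_card Hs)).
by rewrite -cardUI leq_addr.
Qed.

Lemma dH_transl n (x c d : 'rV[F]_n) : dH (x - c + d) d = dH x c.
Proof.
by apply: eq_card => i; rewrite !inE /= !mxE -subr_eq0 addrK subr_eq0.
Qed.

Lemma dH_row_mx m1 m2 (a a' : 'rV[F]_m1) (b b' : 'rV[F]_m2) :
  dH (row_mx a b) (row_mx a' b') = (dH a a' + dH b b')%N.
Proof.
rewrite /dH -!sum1_card !(big_mkcond (fun i => i \in _)) big_split_ord /=.
congr (_ + _)%N; apply: eq_bigr => i _; by rewrite !inE /= ?row_mxEl ?row_mxEr.
Qed.

Lemma dH_cast m1 m2 (e : m1 = m2) (a b : 'rV[F]_m1) :
  dH (castmx (erefl 1%N, e) a) (castmx (erefl 1%N, e) b) = dH a b.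
Proof. by case: m2 / e; rewrite !castmx_id. Qed.


Lemma cover_transfer (m n t : nat) (c d : 'rV[F]_m -> 'rV[F]_n) :
  (forall v, exists u, (dH v (c u) <= t)%N) ->
  (forall u1 u2, u1 != u2 -> (2*t+1 <= dH (d u1) (d u2))%N) ->
  forall w, exists u, (dH w (d u) <= t)%N.
Proof.
move=> Hc Hd.
pose phi x := if [pick u | (dH x (c u) <= t)%N] is Some u then x - c u + d u else x.
have phi_inj : injective phi.
  move=> x y; rewrite /phi.
  case: pickP => [ux Hx|Hn]; last by have [u Hu] := Hc x; have := Hn u; rewrite Hu.
  case: pickP => [uy Hy|Hn]; last by have [u Hu] := Hc y; have := Hn u; rewrite Hu.
  move=> E.
  have Hxy : ux = uy.
    apply/eqP; apply/negP => /negP /Hd H.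
    have := dH_tri (d ux) (x - c ux + d ux) (d uy).
    rewrite [dH (d ux) (_ - _ + _)]dH_sym dH_transl E dH_transl; lia.
  by subst uy; move/addIr: E => /addIr.
have [g _ gK] := injF_bij phi_inj.
move=> w; rewrite -(gK w) /phi; case: pickP => [u Hu|Hn].
  by exists u; rewrite dH_transl.
by have [u Hu] := Hc (g w); have := Hn u; rewrite Hu.
Qed.

Lemma walk (Y : eqType) (m n t : nat) (f : 'rV[F]_m -> Y) (d : 'rV[F]_m -> 'rV[F]_n) :
  (forall w, exists u, (dH w (d u) <= t)%N) ->
  (forall u1 u2, f u1 != f u2 -> (2*t+2 <= dH (d u1) (d u2))%N) ->
  forall u1 u2, f u1 = f u2.
Proof.
move=> Hc Hd u1 u0.
have near : forall a b, (dH (d a) (d b) <= 2*t+1)%N -> f a = f b.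
  move=> a b H; apply/eqP; apply: contraTT H => /Hd H; lia.
suff key : forall j w, (dH w (d u0) <= j)%N -> forall u, (dH w (d u) <= t)%N -> f u = f u0.
  by apply: (key n (d u1)); [apply: dH_le | rewrite dH_refl].
elim=> [|j IH] w Hw u Hu.
  have E : w = d u0 by apply: dH_eq0; apply/eqP; rewrite -leqn0.
  subst w; apply: near; rewrite dH_sym; lia.
case: (leqP (dH w (d u0)) j) => Hj; first exact: (IH w Hj u Hu).
have [i Hi] : exists i, w 0 i != d u0 0 i.
  have : (0 < dH w (d u0))%N by lia.
  by move/card_gt0P => [i]; rewrite inE /= => Hi; exists i.
pose w' := \row_l (if l == i then d u0 0 l else w 0 l).
have Hw' : (dH w' (d u0) <= j)%N.
  have : (dH w' (d u0) < dH w (d u0))%N.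
    apply: proper_card; apply/properP; split.
      apply/subsetP => l; rewrite !inE !mxE; case: (l =P i) => [->|_]; rewrite ?eqxx //.
    by exists i; rewrite !inE ?mxE ?eqxx.
  lia.
have Hww' : (dH w w' <= 1)%N.
  have Hs : [pred l | w 0 l != w' 0 l] \subset pred1 i.
    apply/subsetP => l; rewrite !inE !mxE; case: (l =P i) => [->|_]; rewrite ?eqxx //.
  by apply: (leq_trans (subset_leq_card Hs)); rewrite card1.
have [v Hv] := Hc w'.
have Efv := IH w' Hw' v Hv.
rewrite -Efv; apply: near.
have := dH_tri (d u) w (d v); have := dH_tri w w' (d v); rewrite dH_sym in Hu; lia.
Qed.


Lemma info_set n (C : {vspace 'rV[F]_n}) :
  exists (c : 'rV[F]_(\dim C) -> 'rV[F]_n) (fi : 'I_(\dim C) -> 'I_n),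
   [/\ injective fi, (forall u, c u \in C), (forall u i, c u 0 (fi i) = u 0 i)
     & (forall x, x \in C -> exists u, x = c u)].
Proof.
pose b := vbasis C.
pose G : 'M[F]_(\dim C, n) := \matrix_(i < \dim C) b`_i.
have rowG i : row i G = b`_i by rewrite rowK.
have freeG : row_free G.
  rewrite -kermx_eq0; apply/eqP/row_matrixP => i; rewrite row0.
  set u := row i (kermx G).
  have uG : u *m G = 0 by apply/sub_kermxP; exact: row_sub.
  have Hs : \sum_(j < \dim C) u 0 j *: b`_j = 0.
    by rewrite -[RHS]uG mulmx_sum_row; apply: eq_bigr => j _; rewrite rowG.
  have H0 := (freeP (basis_free (vbasisP C))) (fun j => u 0 j) Hs.
  by apply/rowP => j; rewrite H0 mxE.
have fullGT : row_full G^T by rewrite /row_full mxrank_tr.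
pose fi := fullrankfun fullGT.
pose N := (rowsub fi G^T)^T.
have uN : N \in unitmx by rewrite unitmx_tr fullrowsub_unit.
have GN x i : (x *m G) 0 (fi i) = (x *m N) 0 i.
  by rewrite !mxE; apply: eq_bigr => j _; rewrite !mxE.
exists (fun u => (u *m invmx N) *m G), fi; split.
- exact: fullrankfun_inj.
- move=> u; rewrite mulmx_sum_row; apply: memv_suml => j _.
  by rewrite rowG; apply: memvZ; apply: vbasis_mem; apply: mem_nth; rewrite size_tuple.
- by move=> u i; rewrite GN mulmxKV.
- move=> x xC; pose a := \row_j coord b j x.
  have xa : x = a *m G.
    rewrite mulmx_sum_row {1}(coord_vbasis xC); apply: eq_bigr => j _.
    by rewrite rowG mxE.
  by exists (a *m N); rewrite mulmxK.
Qed.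

End DH.

Lemma arith_aux (k a b c m : nat) : a = k -> b = c -> (a + b)%N = m -> c = (m - k)%N.
Proof. lia. Qed.

Theorem corollary8 (F : finFieldType) (Y : eqType) (n k td : nat)
  (f : 'rV[F]_k -> Y) :
  locally_binary f (2 * td + 1) ->
  (exists u1 u2, f u1 != f u2) ->
  (exists C : {vspace 'rV[F]_n}, perfect_linear_code k td C) ->
  is_opt_redundancy f (2 * td + 1) (2 * td + 2) (n - k + 1).
Proof.
move=> Hlb [u1 [u2 Hf]] [C [dimC Hmin _ Hperf]].
have [c [fi [fi_inj cC cfi csurj]]] := info_set C.
subst k; set k := \dim C in f Hlb u1 u2 Hf c fi fi_inj cC cfi csurj *.
set t := td.
have knle : (k <= n)%N by have := leq_card _ fi_inj; rewrite !card_ord.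
have c_inj : injective c.
  by move=> a b E; apply/rowP => i; rewrite -!cfi E.
have cdist a b : a != b -> (2 * t + 1 <= dH (c a) (c b))%N.
  move=> Hab; apply: Hmin; [exact: cC | exact: cC | by apply/eqP => /c_inj /eqP; rewrite (negbTE Hab)].
have ccov v : exists u, (dH v (c u) <= t)%N.
  by have [x xC Hx] := Hperf v; have [u xu] := csurj x xC; exists u; rewrite -xu.
split.
pose e := enum [pred x | x \notin codom fi].
  have sizee : size e = (n - k)%N.
    rewrite -cardE; have H := cardC [pred x | x \in codom fi].
    have H1 : #|[pred x | x \in codom fi]| = k.
      by rewrite -[RHS](card_ord k) -(card_codom fi_inj); apply: eq_card => x; rewrite inE.
    have H2 : #|[predC [pred x | x \in codom fi]]| = #|[pred x | x \notin codom fi]|.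
      by apply: eq_card => x; rewrite !inE.
    rewrite card_ord in H; exact: (arith_aux H1 H2 H).
  pose g' (j : 'I_(n - k)) : 'I_n :=
    nth (Ordinal (leq_trans (ltn_ord j) (leq_subr k n))) e j.
  pose q u : 'rV[F]_(n - k) := \row_j c u 0 (g' j).
  have key a b : (dH (c a) (c b) <= dH a b + dH (q a) (q b))%N.
    have Hsub : [set x | c a 0 x != c b 0 x] \subset
      fi @: [set i | a 0 i != b 0 i] :|: g' @: [set j | q a 0 j != q b 0 j].
      apply/subsetP => x; rewrite inE => Hx.
      case: (boolP (x \in codom fi)) => [/codomP [i xi]| Hnc].
        apply/setUP; left; apply/imsetP; exists i => //.
        by rewrite inE -!cfi -xi.
      have Hj : (index x e < n - k)%N by rewrite -sizee index_mem mem_enum.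
      have gj : g' (Ordinal Hj) = x by rewrite /g' nth_index // mem_enum.
      apply/setUP; right; apply/imsetP; exists (Ordinal Hj); last by rewrite gj.
      by rewrite inE /q !mxE gj.
    have -> : dH (c a) (c b) = #|[set x | c a 0 x != c b 0 x]|.
      by apply: eq_card => x; rewrite !inE.
    apply: (leq_trans (subset_leq_card Hsub)).
    apply: (leq_trans (leq_card_setU _ _)).
    apply: leq_add; apply: (leq_trans (leq_imset_card _ _)); rewrite /dH;
      by apply: eq_leq; apply: eq_card => x; rewrite !inE.
  pose idx y := find (fun w => f w == y) (enum 'rV[F]_k).
  pose bb u := [forall v, (dH u v <= 2*t+1)%N ==> (idx (f u) <= idx (f v))%N].
  have near2 a b v : (dH a b <= 2*t+1)%N -> f a != f b -> (dH a v <= 2*t+1)%N ->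
      (f v == f a) || (f v == f b).
    move=> Hab Hfab Hav.
    have mem w : (dH a w <= 2*t+1)%N -> f w \in Bf f a (2*td+1).
      by move=> Hw; rewrite /Bf mem_undup; apply: map_f; rewrite mem_filter mem_enum andbT.
    apply: contraT; rewrite negb_or => /andP [H1 H2].
    have : (size [:: f a; f b; f v] <= size (Bf f a (2*td+1)))%N.
      apply: uniq_leq_size.
        by rewrite /= !inE !negb_or Hfab (eq_sym (f a)) (eq_sym (f b)) H1 H2.
      move=> y; rewrite !inE => /or3P [] /eqP ->; apply: mem; rewrite ?dH_refl //.
    have := Hlb a; rewrite /=; lia.
  have idx_inj a b : idx (f a) = idx (f b) -> f a = f b.
    move=> E.
    have Ha : has (fun w => f w == f a) (enum 'rV[F]_k) by apply/hasP; exists a; rewrite ?mem_enum.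
    have Hb : has (fun w => f w == f b) (enum 'rV[F]_k) by apply/hasP; exists b; rewrite ?mem_enum.
    have Ha' : f (nth a (enum 'rV[F]_k) (idx (f a))) == f a := nth_find a Ha.
    have Hb' : f (nth a (enum 'rV[F]_k) (idx (f b))) == f b := nth_find a Hb.
    by rewrite E in Ha'; rewrite -(eqP Ha') (eqP Hb').
  have bb_eq a b : (dH a b <= 2*t+1)%N -> f a != f b -> bb a = (idx (f a) <= idx (f b))%N.
    move=> Hab Hfab; case: (leqP (idx (f a)) (idx (f b))) => H.
      apply/forallP => v; apply/implyP => Hav.
      by case/orP: (near2 a b v Hab Hfab Hav) => /eqP ->; rewrite ?leqnn.
    apply/negbTE/forallPn; exists b; rewrite negb_imply Hab /= -ltnNge; exact: H.
  pose gg u : 'rV[F]_1 := \row_(j < 1) (if bb u then 1 else 0).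
  have gdist a b : (dH a b <= 2*t+1)%N -> f a != f b -> (1 <= dH (gg a) (gg b))%N.
    move=> Hab Hfab.
    have Hne : bb a != bb b.
      rewrite (bb_eq a b Hab Hfab) (bb_eq b a); last 2 first.
      - by rewrite dH_sym.
      - by rewrite eq_sym.
      have : idx (f a) != idx (f b) by apply/eqP => /idx_inj /eqP; rewrite (negbTE Hfab).
      rewrite neq_ltn => /orP [] H.
        by rewrite (ltnW H) leqNgt H.
      by rewrite (ltnW H) (leqNgt (idx (f a))) H.
    apply/card_gt0P; exists ord0; rewrite inE /= /gg !mxE.
    by case: (bb a) (bb b) Hne => [] [] //= _; rewrite ?oner_eq0 // eq_sym oner_eq0.
  exists (fun u => row_mx (q u) (gg u)) => a b; rewrite !dH_row_mx; split.
    move=> Hab; have := key a b; have := cdist a b Hab; lia.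
  move=> Hfab; have Hab : a != b by apply/eqP => E; move: Hfab; rewrite E eqxx.
  have := key a b; have := cdist a b Hab.
  case: (leqP (dH a b) (2*t+1)) => Hd; last by lia.
  have := gdist a b Hd Hfab; lia.
move=> r' p Hp; rewrite leqNgt; apply/negP => Hr.
have e : (k + r' + (n - (k + r')) = n)%N by rewrite subnKC //; lia.
pose d u := castmx (erefl 1%N, e) (row_mx (row_mx u (p u)) (0 : 'rV[F]_(n - (k + r')))).
have dd a b : dH (d a) (d b) = dH (row_mx a (p a)) (row_mx b (p b)).
  by rewrite /d dH_cast dH_row_mx dH_refl addn0.
have dcov : forall w, exists u, (dH w (d u) <= t)%N.
  apply: (cover_transfer ccov) => a b Hab; rewrite dd.
  by have [H _] := Hp a b; apply: H.
have Hw : forall a b, f a != f b -> (2*t+2 <= dH (d a) (d b))%N.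
  by move=> a b Hab; rewrite dd; have [_ H] := Hp a b; apply: H.
by move: Hf; rewrite (walk dcov Hw u1 u2) eqxx.
Qed.
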